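(* Let $C=(V',E')$ be a finite connected undirected simple graph, and let $P$ be the set of BFS-trees of $C$, one with root $v$ for each $v\in V'$. Let $T_m\in P$, with root $r$, satisfy $S_d(T_m)=\min_{T\in P}S_d(T)$. Then $r$ is a centroid of $T_m$.
   Context: A BFS-tree of $C$ with root $v$ is the spanning tree constructed by a breadth-first search of $C$ starting at $v$ (visiting vertices level by level by distance from $v$, each non-root vertex attached to the vertex from which it was first discovered). For a rooted tree $T=(V_T,E_T)$ with root $r$, $d_T(x,y)$ is the number of edges on the path between $x$ and $y$ in $T$ and $S_d(T)=\sum_{x\in V_T}d_T(r,x)$. The vertex deviation of $v$ in $T$ is $m(v)=\frac{1}{|V_T|}\sum_{u\in V_T}d_T(v,u)$, and a centroid of $T$ is a vertex minimizing $m(v)$. *)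

(* Defs.v *)
From mathcomp Require Import all_boot all_order all_algebra.
Set Implicit Arguments. Unset Strict Implicit. Unset Printing Implicit Defensive.
Import Order.TTheory GRing.Theory Num.Theory.

Section Graphs.
Variable V : finType.

Fixpoint ball (e : rel V) (x : V) (n : nat) : {set V} :=
  match n with
  | 0 => [set x]
  | n'.+1 => ball e x n' :|: [set y | [exists z in ball e x n', e z y]]
  end.

(* Graph distance (number of edges of a shortest path); any path between
   two vertices of a finite graph can be shortened to < #|V| edges.
   Returns #|V| for unreachable vertices (never used here). *)
Definition dist (e : rel V) (x y : V) : nat :=
  find (fun n => y \in ball e x n) (iota 0 #|V|).

Definition simple_connected_graph (e : rel V) : Prop :=
  irreflexive e /\ symmetric e /\ (forall x y : V, connect e x y).

Definition adj_lists (e : rel V) (adj : V -> seq V) : Prop :=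
  forall u, uniq (adj u) /\ (forall w, (w \in adj u) = e u w).

Fixpoint bfs_loop (adj : V -> seq V) (fuel : nat) (queue visited : seq V)
    (par : V -> V) : V -> V :=
  match fuel, queue with
  | 0, _ => par
  | _, [::] => par
  | f.+1, u :: q =>
      let new := undup [seq w <- adj u | w \notin visited] in
      bfs_loop adj f (q ++ new) (visited ++ new)
        (fun w => if w \in new then u else par w)
  end.

(* Parent function of the BFS-tree rooted at v for adjacency lists adj
   (the root is its own parent). *)
Definition bfs_parent (adj : V -> seq V) (v : V) : V -> V :=
  bfs_loop adj #|V| [:: v] [:: v] id.

Definition tree_rel (r : V) (par : V -> V) : rel V :=
  fun x y => ((x != r) && (par x == y)) || ((y != r) && (par y == x)).

Definition is_bfs_tree (e : rel V) (v : V) (par : V -> V) : Prop :=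
  exists adj, adj_lists e adj /\ par = bfs_parent adj v.

Definition Sd (r : V) (par : V -> V) : nat :=
  \sum_(x : V) dist (tree_rel r par) r x.

Definition vdev (r : V) (par : V -> V) (u : V) : rat :=
  ((\sum_(x : V) dist (tree_rel r par) u x)%:R / (#|V|)%:R)%R.

Definition is_centroid (r : V) (par : V -> V) (u : V) : Prop :=
  forall w : V, (vdev r par u <= vdev r par w)%R.

End Graphs.

(* Main.v *)
Require Import Defs.
From mathcomp Require Import all_boot all_order all_algebra.
From mathcomp Require Import zify.
Set Implicit Arguments. Unset Strict Implicit.
Import Order.TTheory GRing.Theory Num.Theory.

Lemma ballS (V : finType) (e : rel V) x n y :
  (y \in ball e x n.+1) = (y \in ball e x n) || [exists z in ball e x n, e z y].
Proof. by rewrite /= in_setU in_set. Qed.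

Lemma ball0 (V : finType) (e : rel V) x y : (y \in ball e x 0) = (y == x).
Proof. by rewrite /= in_set1. Qed.

Lemma ball_mono (V : finType) (e : rel V) x m n y :
  m <= n -> y \in ball e x m -> y \in ball e x n.
Proof.
elim: n => [|n IH]; first by rewrite leqn0 => /eqP ->.
rewrite leq_eqVlt => /orP [/eqP -> //|Hmn] Hy.
by rewrite ballS (IH Hmn Hy).
Qed.

Lemma ball_step (V : finType) (e : rel V) x n z y :
  z \in ball e x n -> e z y -> y \in ball e x n.+1.
Proof. by move=> Hz Hzy; rewrite ballS; apply/orP; right; apply/existsP; exists z; rewrite Hz. Qed.

Lemma dist_le_card (V : finType) (e : rel V) x y : dist e x y <= #|V|.
Proof. by rewrite /dist; have := find_size (fun n => y \in ball e x n) (iota 0 #|V|); rewrite size_iota. Qed.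

Lemma dist_ball (V : finType) (e : rel V) x y :
  dist e x y < #|V| -> y \in ball e x (dist e x y).
Proof.
rewrite /dist => H.
have Hh : has (fun n => y \in ball e x n) (iota 0 #|V|) by rewrite has_find size_iota.
have := nth_find 0 Hh. by rewrite nth_iota.
Qed.

Lemma dist_min (V : finType) (e : rel V) x y n :
  y \in ball e x n -> n < #|V| -> dist e x y <= n.
Proof.
move=> Hy Hn; rewrite leqNgt; apply/negP => Hlt.
have := before_find 0 Hlt. by rewrite nth_iota // Hy.
Qed.

Lemma last_ball (V : finType) (e : rel V) u p : forall y k,
  path e y p -> y \in ball e u k -> last y p \in ball e u (k + size p).
Proof.
elim: p => [|z p IH] y k /=; first by rewrite addn0.
move=> /andP [Hyz Hp] Hy. rewrite addnS -addSn. apply: IH => //.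
exact: ball_step Hy Hyz.
Qed.

Lemma dist_conn (V : finType) (e : rel V) u x :
  connect e u x -> dist e u x < #|V|.
Proof.
move=> /connectP [p Hp ->].
case: (shortenP Hp) => p' Hp' Hu _.
have Hu0 : u \in ball e u 0 by rewrite ball0.
have Hb := last_ball Hp' Hu0.
rewrite add0n in Hb. have Hs : size p' < #|V|.
  by move/card_uniqP: Hu => /= <-; apply: max_card.
exact: (leq_ltn_trans (dist_min Hb Hs) Hs).
Qed.

Lemma distD2 (V : finType) (e : rel V) u y w :
  e y w -> dist e u w <= (dist e u y).+1.
Proof.
move=> Hyw.
case: (ltnP (dist e u y) #|V|) => Hy; last first.
  by apply: leq_trans (dist_le_card _ _ _) _; apply: leqW.
case: (ltnP (dist e u y).+1 #|V|) => Hy1.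
  apply: dist_min => //. exact: ball_step (dist_ball Hy) Hyw.
by apply: leq_trans (dist_le_card _ _ _) _.
Qed.

Lemma dist0 (V : finType) (e : rel V) u w :
  dist e u w < #|V| -> dist e u w = 0 -> w = u.
Proof. by move=> H H0; have := dist_ball H; rewrite H0 ball0 => /eqP. Qed.

Lemma distD3 (V : finType) (e : rel V) u w :
  dist e u w < #|V| -> w != u ->
  exists y, e y w /\ (dist e u y).+1 = dist e u w.
Proof.
move=> H Hw. have Hb := dist_ball H.
move: H Hb. case Hd: (dist e u w) => [|k] H Hb.
  by rewrite ball0 (negbTE Hw) in Hb.
rewrite ballS in Hb. case/orP: Hb => [Hb|/existsP [y /andP [Hy Hyw]]].
  have := dist_min Hb (ltnW H). by rewrite Hd ltnn.
exists y; split => //.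
have Hdy := dist_min Hy (ltnW H).
have := distD2 u Hyw. rewrite Hd. lia.
Qed.

Lemma all_vis (V : finType) (e : rel V) u (vis : seq V) :
  (forall x, connect e u x) -> u \in vis ->
  (forall w, w \in vis -> forall y, e w y -> y \in vis) -> forall x, x \in vis.
Proof.
move=> Hc Hu Hcl x.
have: dist e u x <= dist e u x by [].
elim: (dist e u x) {-2}x => [|n IH] z Hz.
  have Hlt := dist_conn (Hc z).
  by rewrite (dist0 Hlt (_ : dist e u z = 0)) //; lia.
case: (eqVneq z u) => [->//|Hzu].
have [y [Hyz Hd]] := distD3 (dist_conn (Hc z)) Hzu.
apply: (Hcl y) => //. apply: IH. lia.
Qed.

Lemma pairwise_const (V : finType) (d : V -> nat) c (s : seq V) :
  (forall y, y \in s -> d y = c) -> pairwise (fun x y => d x <= d y) s.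
Proof.
elim: s => [//|z s IH] H /=. apply/andP; split.
  apply/allP => y Hy. by rewrite (H z (mem_head _ _)) (H y) // in_cons Hy orbT.
apply: IH => y Hy. by apply: H; rewrite in_cons Hy orbT.
Qed.

Definition Final (V : finType) (e : rel V) u (par : V -> V) :=
  forall x, x != u -> dist e u (par x) < dist e u x.

Lemma bfs_inv (V : finType) (e : rel V) adj u :
  adj_lists e adj -> (forall x, connect e u x) ->
  forall f q vis par pre,
  u \in vis ->
  vis = pre ++ q -> uniq vis -> #|V| <= f + size pre ->
  (forall w, w \in vis -> w \notin q -> forall y, e w y -> y \in vis) ->
  (forall w, w \in vis -> w != u -> dist e u (par w) < dist e u w) ->
  pairwise (fun x y => dist e u x <= dist e u y) q ->
  (forall b q', q = b :: q' ->
     (forall y, y \in q -> dist e u y <= (dist e u b).+1) /\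
     (forall w, dist e u w < dist e u b -> w \in vis)) ->
  Final e u (bfs_loop adj f q vis par).
Proof.
move=> Hadj Hc.
have Hfin : forall (vis : seq V) (par : V -> V), u \in vis ->
  (forall w, w \in vis -> forall y, e w y -> y \in vis) ->
  (forall w, w \in vis -> w != u -> dist e u (par w) < dist e u w) -> Final e u par.
  rewrite /Final.
  move=> vis par Hu Hcl Hp x Hx. apply: Hp => //. exact: (all_vis Hc Hu Hcl x).
elim=> [|k IH] q vis par pre Hu Heq Huniq Hsz Hcl Hp Hpw Hhd.
  have Hq : q = [::].
    have: size vis <= #|V| by move/card_uniqP: Huniq => <-; apply: max_card.
    rewrite Heq size_cat. case: q {Heq Hcl Hpw Hhd} => //= ? ? H; move: (leq_trans H Hsz); by rewrite add0n addnS ltnNge leq_addr.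
  subst q. apply: (Hfin vis par Hu _ Hp) => w Hw. exact: Hcl.
case: q Heq Hcl Hpw Hhd => [|a q'] Heq Hcl Hpw Hhd.
  apply: (Hfin vis par Hu _ Hp) => w Hw. exact: Hcl.
rewrite /=.
set new := undup [seq w <- adj a | w \notin vis].
have Hnew : forall w, (w \in new) = e a w && (w \notin vis).
  by move=> w; rewrite mem_undup mem_filter (proj2 (Hadj a)) andbC.
have [Hhd1 Hhd2] := Hhd a q' erefl.
move: (Hpw); rewrite pairwise_cons => /andP [Hall Hpw'].
have Hmin : forall y, y \in a :: q' -> dist e u a <= dist e u y.
  move=> y; rewrite in_cons => /orP [/eqP ->//|Hy]. exact: (allP Hall).
have Hvis : forall w, dist e u w <= dist e u a -> w \in vis.
  move=> w Hw. case: (eqVneq w u) => [->//|Hwu].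
  have [y [Hyw Hdy]] := distD3 (dist_conn (Hc w)) Hwu.
  have Hyv : y \in vis by apply: Hhd2; lia.
  apply: (Hcl y) Hyw => //. apply/negP => /Hmin. lia.
have Hnewd : forall w, w \in new -> dist e u w = (dist e u a).+1.
  move=> w; rewrite Hnew => /andP [Haw Hwv].
  have H1 := distD2 u Haw.
  case: (ltnP (dist e u a) (dist e u w)) => H2; first lia.
  by rewrite Hvis in Hwv.
apply: (IH _ _ _ (pre ++ [:: a])).
- by rewrite mem_cat Hu.
- by rewrite Heq -!catA.
- rewrite cat_uniq Huniq undup_uniq andbT /=. apply/hasPn => w.
  by rewrite Hnew => /andP [_ ->].
- by rewrite size_cat /= addn1 addnS -addSn.
- move=> w; rewrite !mem_cat negb_or => /orP [Hw|Hw] /andP [Hwq Hwn] y Hy; last by rewrite Hw in Hwn.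
  case: (eqVneq w a) => [Ewa|Hwa].
    case Hyv: (y \in vis); by rewrite mem_cat Hyv //= Hnew -Ewa Hy Hyv.
  by rewrite mem_cat (Hcl w Hw _ y Hy) // in_cons negb_or Hwa Hwq.
- move=> w; rewrite mem_cat => /orP [Hw|Hw] Hwu.
    case: ifP => Hwn; last exact: Hp.
    by rewrite (Hnewd w Hwn).
  by rewrite Hw (Hnewd w Hw).
- rewrite pairwise_cat Hpw' /=. apply/andP; split.
    apply/allrelP => x y Hx Hy. rewrite (Hnewd y Hy). apply: Hhd1.
    by rewrite in_cons Hx orbT.
  by apply: (pairwise_const (c := (dist e u a).+1)).
- move=> b q'' Hb.
  have Hbin : b \in q' ++ new by rewrite Hb mem_head.
  have Hbd : dist e u a <= dist e u b <= (dist e u a).+1.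
    move: Hbin; rewrite mem_cat => /orP [Hbq|Hbn].
      rewrite Hmin ?in_cons ?Hbq ?orbT //=. apply: Hhd1. by rewrite in_cons Hbq orbT.
    by rewrite (Hnewd b Hbn) leqnSn leqnn.
  split.
    move=> y; rewrite mem_cat => /orP [Hy|Hy].
      have := Hhd1 y; rewrite in_cons Hy orbT => /(_ isT). lia.
    rewrite (Hnewd y Hy). lia.
  move=> w Hw. rewrite mem_cat Hvis //. lia.
Qed.

Lemma bfs_par_edge (V : finType) (e : rel V) adj :
  adj_lists e adj -> forall f q vis (par : V -> V),
  (forall w, par w = w \/ e (par w) w) ->
  forall w, bfs_loop adj f q vis par w = w \/ e (bfs_loop adj f q vis par w) w.
Proof.
move=> Hadj; elim=> [|k IH] [|a q] vis par Hp //=.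
apply: IH => w. case: ifP => Hw; last exact: Hp.
right. move: Hw; rewrite mem_undup mem_filter (proj2 (Hadj a)) => /andP [_ ->] //.
Qed.

Lemma ball_sub (V : finType) (e : rel V) r (par : V -> V) a :
  symmetric e -> (forall w, par w = w \/ e (par w) w) ->
  forall n y, y \in ball (tree_rel r par) a n -> y \in ball e a n.
Proof.
move=> Hsym Hp; elim=> [|n IH] y //.
rewrite !ballS => /orP [Hy|/existsP [z /andP [Hz Hzy]]]; first by rewrite IH.
have Hz' := IH z Hz.
have [<-|Hezy] : z = y \/ e z y.
  move: Hzy; rewrite /tree_rel => /orP [/andP [_ /eqP <-]|/andP [_ /eqP <-]].
    case: (Hp z) => [->|H]; [by left | by right; rewrite Hsym].
  case: (Hp y) => [->|H]; [by left | by right].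
  by rewrite Hz'.
apply/orP; right; apply/existsP; exists z; by rewrite Hz' Hezy.
Qed.

Lemma dist_sub (V : finType) (e : rel V) r (par : V -> V) a x :
  symmetric e -> (forall w, par w = w \/ e (par w) w) ->
  dist e a x <= dist (tree_rel r par) a x.
Proof.
move=> Hsym Hp.
case: (ltnP (dist (tree_rel r par) a x) #|V|) => H.
  apply: dist_min => //. apply: (ball_sub Hsym Hp). exact: dist_ball.
exact: leq_trans (dist_le_card _ _ _) H.
Qed.

Lemma tree_dist (V : finType) (e : rel V) u (par : V -> V) x :
  (forall x, connect e u x) -> Final e u par ->
  dist (tree_rel u par) u x <= dist e u x.
Proof.
move=> Hc Hf.
suff Hb : forall n z, dist e u z <= n -> z \in ball (tree_rel u par) u (dist e u z).
  apply: dist_min; [exact: Hb (leqnn _) | exact: dist_conn].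
elim=> [|n IH] z Hz.
  case: (eqVneq z u) => [->|Hzu]; first by apply: (ball_mono (m:=0)); rewrite ?ball0.
  have := Hf z Hzu. lia.
case: (eqVneq z u) => [->|Hzu]; first by apply: (ball_mono (m:=0)); rewrite ?ball0.
have Hlt := Hf z Hzu.
have Hpz := IH (par z) ltac:(lia).
move: Hlt Hpz. case: (dist e u z) => [//|k] Hlt Hpz.
apply: (ball_step (z := par z)).
  apply: ball_mono Hpz. lia.
by rewrite /tree_rel Hzu eqxx orbT.
Qed.

Lemma bfs_final (V : finType) (e : rel V) adj u :
  adj_lists e adj -> (forall x, connect e u x) ->
  Final e u (bfs_parent adj u).
Proof.
move=> Hadj Hc. rewrite /bfs_parent.
apply: (bfs_inv Hadj Hc (pre := [::])) => //.
- by rewrite mem_head.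
- by rewrite addn0.
- by move=> w Hw; rewrite Hw.
- by move=> w; rewrite in_cons orbF => /eqP ->; rewrite eqxx.
- move=> b q' [<- _]; split.
    by move=> y; rewrite in_cons orbF => /eqP ->.
  have H0 : dist e u u <= 0.
    apply: dist_min; first by rewrite ball0.
    by apply/card_gt0P; exists u.
  move=> w Hw. exfalso. move: (leq_trans Hw H0). by rewrite ltn0.
Qed.

Theorem lemma5p14 (V : finType) (e : rel V)
    (HC : simple_connected_graph e)
    (P : V -> (V -> V))
    (HP : forall v : V, is_bfs_tree e v (P v))
    (r : V)
    (Hmin : forall v : V, Sd r (P r) <= Sd v (P v)) :
  is_centroid r (P r) r.
Proof.
move: HC => [Hirr [Hsym Hc]].
have Hedge : forall w, P r w = w \/ e (P r w) w.
  case: (HP r) => adjr [Hadjr ->]. rewrite /bfs_parent.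
  by apply: bfs_par_edge => // w; left.
rewrite /is_centroid /vdev => w.
apply: ler_wpM2r; first by rewrite invr_ge0 ler0n.
rewrite ler_nat.
have Hmw := Hmin w. rewrite /Sd in Hmw.
apply: leq_trans Hmw _.
case: (HP w) => adjw [Hadjw Ew]. rewrite Ew.
apply: leq_sum => x _.
apply: leq_trans (dist_sub r w x Hsym Hedge).
apply: tree_dist => //. exact: bfs_final.
Qed.
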